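(* Let $A\in\mathbb{R}^{n\times n}$ and $H\in\mathbb{R}^{n\times n}$ be symmetric positive definite, let $Z\in\mathbb{R}^{n\times r}$ with $r<n$ have full column rank, let $P=I-AZ(Z^TAZ)^{-1}Z^T$, let $\bm b\in\mathbb{R}^n$ with $P\bm b\neq \bm 0$, and let $\bm x = A^{-1}\bm b$. For arbitrary vectors $\tilde{\bm x}_j\in\mathbb{R}^n$ define $$\bm{x}_j = P^T\tilde{\bm{x}}_j + Z(Z^TAZ)^{-1}Z^T\bm{b},\qquad \bm r_j = \bm b - A\bm x_j.$$ Then $$\frac{\|\bm{x}-\bm{x}_j\|_{PA}}{\|\bm{x}\|_{PA}} \le \sqrt{\kappa_{\mathrm{eff}}(H^{-1}PA)}\,\frac{\|\bm{r}_j\|_{H^{-1}}}{\|P\bm{b}\|_{H^{-1}}}.$$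
   Context: $PA$ is symmetric positive semidefinite with kernel equal to the range of $Z$ (dimension $r$). For a symmetric positive semidefinite matrix $B$, $\|\bm v\|_B=\sqrt{\bm v^TB\bm v}$. The matrix $H^{-1}PA$ is similar to the symmetric positive semidefinite matrix $L^{-1}PAL^{-T}$, where $H=LL^T$ is the Cholesky factorization, so its eigenvalues are real and nonnegative; ordering them $\lambda_1\le\dots\le\lambda_n$, exactly $r$ are zero, and $\kappa_{\mathrm{eff}}(H^{-1}PA)=\lambda_n(H^{-1}PA)/\lambda_{r+1}(H^{-1}PA)$. *)

(* Defs.v *)
From HB Require Import structures.
From mathcomp Require Import all_boot all_order all_algebra.
From mathcomp Require Import reals.
Set Implicit Arguments. Unset Strict Implicit. Unset Printing Implicit Defensive.
Import Order.TTheory GRing.Theory Num.Theory.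
Local Open Scope ring_scope.

Definition spd (R : realType) (n : nat) (M : 'M[R]_n) : Prop :=
  M^T = M /\ forall v : 'cV[R]_n, v != 0 -> 0 < (v^T *m M *m v) 0 0.

Definition mxnorm (R : realType) (n : nat) (B : 'M[R]_n) (v : 'cV[R]_n) : R :=
  Num.sqrt ((v^T *m B *m v) 0 0).

Definition ordered_eigenvalues (R : realType) (n : nat) (M : 'M[R]_n)
  (s : seq R) : Prop :=
  [/\ size s = n, sorted <=%R s & char_poly M = \prod_(x <- s) ('X - x%:P)].

(* kappa_eff = lambda_n / lambda_{r+1}  (0-based indices n-1 and r) *)
Definition kappa_eff (R : realType) (n r : nat) (s : seq R) : R :=
  s`_(n.-1) / s`_r.

Definition deflP (R : realType) (n r : nat) (A : 'M[R]_n) (Z : 'M[R]_(n, r))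
  : 'M[R]_n := 1%:M - A *m Z *m invmx (Z^T *m A *m Z) *m Z^T.

(* Main.v *)
Require Import Defs.
From HB Require Import structures.
From mathcomp Require Import all_boot all_order all_algebra.
From mathcomp Require Import reals.
From mathcomp Require Import ring lra zify.
Set Implicit Arguments. Unset Strict Implicit. Unset Printing Implicit Defensive.
Import Order.TTheory GRing.Theory Num.Theory.
Local Open Scope ring_scope.

Lemma quad_delta (R : realType) m (X : 'M[R]_m) (j : 'I_m) :
  (delta_mx 0 j *m X *m delta_mx j 0) (0 : 'I_1) (0 : 'I_1) = X j j.
Proof. by rewrite -rowE -colE !mxE. Qed.

Lemma unit_of_inj (R : realType) m (M : 'M[R]_m) :
  (forall v : 'cV_m, M *m v = 0 -> v = 0) -> M \in unitmx.
Proof.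
move=> inj; rewrite -unitmx_tr -row_free_unit -kermx_eq0.
apply/eqP/row_matrixP => i; rewrite row0.
have h : row i (kermx M^T) *m M^T = 0 by rewrite -row_mul mulmx_ker row0.
have := inj (row i (kermx M^T))^T.
rewrite -[M in M *m _]trmxK -trmx_mul h trmx0 => /(_ erefl).
by move/(congr1 trmx); rewrite trmxK trmx0.
Qed.

Lemma spd_ge0 (R : realType) m (M : 'M[R]_m) (v : 'cV_m) :
  spd M -> 0 <= (v^T *m M *m v) 0 0.
Proof.
case=> _ pos; have [->|nz] := eqVneq v 0.
  by rewrite mulmx0 mxE.
exact/ltW/pos.
Qed.

Lemma spd_eq0 (R : realType) m (M : 'M[R]_m) (v : 'cV_m) :
  spd M -> (v^T *m M *m v) 0 0 = 0 -> v = 0.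
Proof.
case=> _ pos h; apply/eqP; apply/negPn/negP => nz.
by have := pos v nz; rewrite h ltxx.
Qed.

Lemma spd_unit (R : realType) m (M : 'M[R]_m) : spd M -> M \in unitmx.
Proof.
move=> sM; apply: unit_of_inj => v Mv; apply: (spd_eq0 sM).
by rewrite -mulmxA Mv mulmx0 mxE.
Qed.

Lemma spd_inv (R : realType) m (M : 'M[R]_m) : spd M -> spd (invmx M).
Proof.
move=> sM; have uM := spd_unit sM; case: (sM) => sym pos; split.
  by rewrite trmx_inv sym.
move=> v nz; set w := invmx M *m v.
have vE : v = M *m w by rewrite /w mulmxA mulmxV // mul1mx.
have wnz : w != 0 by apply: contraNneq nz => w0; rewrite vE w0 mulmx0.
rewrite vE trmx_mul sym -!mulmxA (mulmxA M) mulmxV // mul1mx mulmxA.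
exact: pos.
Qed.

Lemma E_unit (R : realType) n r (A : 'M[R]_n) (Z : 'M[R]_(n, r)) :
  spd A -> \rank Z = r -> Z^T *m A *m Z \in unitmx.
Proof.
move=> sA rZ; apply: unit_of_inj => v Ev.
have Zv : Z *m v = 0.
  apply: (spd_eq0 sA); rewrite trmx_mul.
  have -> : v^T *m Z^T *m A *m (Z *m v) = v^T *m (Z^T *m A *m Z *m v) by rewrite !mulmxA.
  rewrite Ev.
  by rewrite mulmx0 mxE.
have fr : row_free Z^T by rewrite /row_free mxrank_tr rZ.
apply/eqP; rewrite -[v]trmxK -(trmx0) (inj_eq (@trmx_inj _ _ _)) -(mulmx_free_eq0 _ fr).
by rewrite -trmx_mul Zv trmx0.
Qed.

Lemma defl_facts (R : realType) n r (A : 'M[R]_n) (Z : 'M[R]_(n, r)) :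
  spd A -> \rank Z = r ->
  let Q := Z *m invmx (Z^T *m A *m Z) *m Z^T in
  [/\ deflP A Z = 1%:M - A *m Q, Q^T = Q, Q *m A *m Q = Q
    & Z^T *m A *m Q = Z^T].
Proof.
move=> sA rZ Q; have uE := E_unit sA rZ; case: (sA) => symA _.
have ZAQ : Z^T *m A *m Q = Z^T.
  by rewrite /Q !mulmxA mulmxV // mul1mx.
split => //.
- by rewrite /deflP /Q !mulmxA.
- rewrite /Q !trmx_mul trmxK trmx_inv !trmx_mul trmxK symA.
  by rewrite !mulmxA.
- have -> : Q *m A *m Q = Z *m invmx (Z^T *m A *m Z) *m (Z^T *m A *m Q).
    by rewrite /Q !mulmxA.
  by rewrite ZAQ.
Qed.

Lemma B_facts (R : realType) n (A Q : 'M[R]_n) :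
  A^T = A -> Q^T = Q -> Q *m A *m Q = Q ->
  let Pd := 1%:M - A *m Q in let B := Pd *m A in
  [/\ B^T = B, A *m Pd^T = B, Pd *m B = B, B *m Q = 0
    & Pd *m A *m Pd^T = B].
Proof.
move=> sA sQ QAQ Pd B.
have BE : B = A - A *m Q *m A by rewrite /B /Pd mulmxBl mul1mx.
have PT : Pd^T = 1%:M - Q *m A.
  by rewrite /Pd linearB /= trmx1 trmx_mul sA sQ.
have APT : A *m Pd^T = B by rewrite PT mulmxBr mulmx1 mulmxA BE.
have PB : Pd *m B = B.
  rewrite {1}BE /Pd mulmxBl !mul1mx mulmxBr -BE.
  have e1 : A *m Q *m (A *m Q *m A) = A *m (Q *m A *m Q) *m A by rewrite !mulmxA.
  by rewrite e1 QAQ subrr subr0.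
split => //.
- by rewrite BE linearB /= !trmx_mul sA sQ mulmxA.
- rewrite BE mulmxBl.
  have -> : A *m Q *m A *m Q = A *m (Q *m A *m Q) by rewrite !mulmxA.
  by rewrite QAQ subrr.
- by rewrite -mulmxA APT.
Qed.


Lemma rank_B (R : realType) n r (A : 'M[R]_n) (Z : 'M[R]_(n, r)) :
  spd A -> \rank Z = r -> \rank (deflP A Z *m A) = (n - r)%N.
Proof.
move=> sA rZ; have [PE QT QAQ ZAQ] := defl_facts sA rZ.
set Q := Z *m _ *m Z^T in PE QT QAQ ZAQ.
have uA := spd_unit sA; case: (sA) => symA _.
have [BT APT PB BQ PAP] := B_facts symA QT QAQ.
rewrite PE; set B := (1%:M - A *m Q) *m A in BT APT PB BQ PAP *.
have BE : B = A - A *m Q *m A by rewrite /B mulmxBl mul1mx.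
set K := kermx B.
have s1 : (Z^T <= K)%MS.
  apply/sub_kermxP; rewrite BE mulmxBr.
  have -> : Z^T *m (A *m Q *m A) = Z^T *m A *m Q *m A by rewrite !mulmxA.
  by rewrite ZAQ subrr.
have s2 : (K <= Z^T)%MS.
  have KB : K *m B = 0 by rewrite mulmx_ker.
  have KE : K = K *m A *m Q.
    move: KB; rewrite BE mulmxBr => /eqP; rewrite subr_eq0 => /eqP e.
    have e' : K *m A *m Q *m A = K *m A by rewrite [RHS]e !mulmxA.
    by rewrite -[in LHS](mulmxK uA K) -[in LHS]e' mulmxK.
  by rewrite KE /Q !mulmxA submxMl.
have rK : \rank K = r.
  apply/eqP; rewrite eqn_leq; apply/andP; split.
    by rewrite -{1}rZ -[\rank Z]mxrank_tr; exact: (mxrankS s2).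
  by rewrite -{1}rZ -[\rank Z]mxrank_tr; exact: (mxrankS s1).
have := mxrank_ker B; rewrite -/K rK.
have := rank_leq_row B; lia.
Qed.

Lemma sa_sq (R : realType) n (H S Y : 'M[R]_n) :
  spd H -> H *m S = S^T *m H -> S *m (S *m Y) = 0 -> S *m Y = 0.
Proof.
move=> sH sa SSY; set V := S *m Y.
have VHV : V^T *m H *m V = 0.
  rewrite /V trmx_mul.
  have -> : Y^T *m S^T *m H *m (S *m Y) = Y^T *m (S^T *m H) *m (S *m Y) by rewrite !mulmxA.
  rewrite -sa.
  have -> : Y^T *m (H *m S) *m (S *m Y) = Y^T *m H *m (S *m (S *m Y)) by rewrite !mulmxA.
  by rewrite SSY mulmx0.
clearbody V.
apply/matrixP => i j; rewrite mxE.
have cj : col j V = 0.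
  apply: (spd_eq0 sH); rewrite colE trmx_mul trmx_delta.
  have -> : (delta_mx 0 j : 'rV_n) *m V^T *m H *m (V *m delta_mx j 0) =
            (delta_mx 0 j : 'rV_n) *m (V^T *m H *m V) *m (delta_mx j 0 : 'cV_n).
    by rewrite !mulmxA.
  by rewrite VHV mulmx0 mul0mx mxE.
by have := congr1 (fun M : 'cV_n => M i 0) cj; rewrite !mxE.
Qed.

Lemma sa_pow (R : realType) n (H S Y : 'M[R]_n.+1) k :
  spd H -> H *m S = S^T *m H -> S ^+ k.+1 *m Y = 0 -> S *m Y = 0.
Proof.
move=> sH sa; elim: k Y => [|k IH] Y; first by rewrite expr1.
move=> h; apply: IH.
have e1 : S ^+ k.+1 *m Y = S *m (S ^+ k *m Y) by rewrite exprS -mulmxE mulmxA.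
rewrite e1; apply: (sa_sq sH sa).
by rewrite -e1 mulmxA mulmxE -exprS.
Qed.

Lemma horner_comm (R : realType) n (M : 'M[R]_n.+1) (p q : {poly R}) :
  horner_mx M p *m horner_mx M q = horner_mx M q *m horner_mx M p.
Proof. by rewrite mulmxE -!rmorphM mulrC. Qed.

Lemma sa_shift (R : realType) n (H M : 'M[R]_n) (x : R) :
  H^T = H -> H *m M = M^T *m H -> H *m (M - x%:M) = (M - x%:M)^T *m H.
Proof.
move=> sH sa; rewrite mulmxBr linearB /= mulmxBl sa tr_scalar_mx.
by rewrite mul_mx_scalar mul_scalar_mx.
Qed.

Lemma prod_reduce (R : realType) n (H M : 'M[R]_n.+1) (u : seq R) (k : R -> nat) :
  spd H -> H *m M = M^T *m H ->
  forall Y : 'M_n.+1, horner_mx M (\prod_(x <- u) ('X - x%:P) ^+ (k x).+1) *m Y = 0 ->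
            horner_mx M (\prod_(x <- u) ('X - x%:P)) *m Y = 0.
Proof.
move=> sH sa; elim: u => [|x u IH] Y; first by rewrite !big_nil.
rewrite !big_cons !rmorphM /= -!mulmxE -!mulmxA rmorphXn /= => h.
have NE : horner_mx M ('X - x%:P) = M - x%:M.
  by rewrite rmorphB /= horner_mx_X horner_mx_C.
have saN := sa_shift x (proj1 sH) sa.
rewrite NE in h *.
have h1 := sa_pow sH saN h.
have h2 : horner_mx M (\prod_(j <- u) ('X - j%:P) ^+ (k j).+1) *m ((M - x%:M) *m Y) = 0.
  by rewrite mulmxA -NE horner_comm -mulmxA NE.
have h3 := IH _ h2.
by rewrite mulmxA -NE -horner_comm -mulmxA NE.
Qed.

Lemma diag_M (R : realType) n (H M : 'M[R]_n.+1) (s : seq R) :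
  spd H -> H *m M = M^T *m H -> char_poly M = \prod_(x <- s) ('X - x%:P) ->
  exists2 Pm : 'M_n.+1, Pm \in unitmx &
    exists d : 'rV_n.+1, M = invmx Pm *m diag_mx d *m Pm.
Proof.
move=> sH sa cpE; have CH := Cayley_Hamilton M.
rewrite cpE -prodr_undup_exp_count in CH.
have : horner_mx M (\prod_(x <- undup s) ('X - x%:P) ^+ (count_mem x s).-1.+1)
        *m 1%:M = 0.
  rewrite mulmx1 -[RHS]CH; congr horner_mx; apply: eq_big_seq => x.
  rewrite mem_undup => xs; rewrite prednK //.
  by rewrite -has_count has_pred1.
move/(prod_reduce sH sa); rewrite mulmx1 => q0.
have : diagonalizable M.
  apply/diagonalizableP; exists (undup s); first exact: undup_uniq.
  exact: mxminpoly_min.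
case=> Pm Pu /(similar_diagLR Pu) [d ->]; exists Pm => //; exists d.
by rewrite conjVmx.
Qed.

Lemma diag_poly (R : realType) n (d : 'rV[R]_n) (c1 c2 : R) :
  c1 *: diag_mx d + c2 *: (diag_mx d *m diag_mx d) =
  diag_mx (\row_i (c1 * d 0 i + c2 * d 0 i ^+ 2)).
Proof.
apply/matrixP => i j; rewrite mul_diag_mx !mxE.
by case: eqP => _; rewrite ?mulr1n ?mulr0n ?mulr0 ?addr0 // expr2 mulrA.
Qed.

Lemma spec (R : realType) n (H B Pm : 'M[R]_n) (d : 'rV_n) :
  spd H -> B^T = B -> (forall v : 'cV_n, 0 <= (v^T *m B *m v) 0 0) ->
  Pm \in unitmx ->
  invmx H *m B = invmx Pm *m diag_mx d *m Pm ->
  (forall i, 0 <= d 0 i) /\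
  (forall c1 c2 : R, (forall i, 0 <= c1 * d 0 i + c2 * d 0 i ^+ 2) ->
     forall u : 'cV_n,
       0 <= (u^T *m (c1 *: B + c2 *: (B *m invmx H *m B)) *m u) 0 0).
Proof.
move=> sH BT Bpos Pu hB; have uH := spd_unit sH; have symH := proj1 sH.
have HHi := mulmxV uH; have HiH := mulVmx uH.
move: hB HHi HiH; move: (invmx H) => Hi hB HHi HiH.
move: hB (mulVmx Pu) (mulmxV Pu); move: (invmx Pm) => Pi hB PiPm PmPi.
have PmTPiT : Pm^T *m Pi^T = 1%:M by rewrite -trmx_mul PiPm trmx1.
have PiTPmT : Pi^T *m Pm^T = 1%:M by rewrite -trmx_mul PmPi trmx1.
have [G [HE GT Gpos]] : exists G, [/\ H = Pm^T *m G *m Pm, G^T = G &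
     forall w : 'cV_n, (w^T *m G *m w) 0 0 = ((Pi *m w)^T *m H *m (Pi *m w)) 0 0].
  exists (Pi^T *m H *m Pi); split.
  - by rewrite !mulmxA PmTPiT mul1mx -mulmxA PiPm mulmx1.
  - by rewrite !trmx_mul trmxK symH mulmxA.
  - by move=> w; rewrite trmx_mul !mulmxA.
set D := diag_mx d.
have BE : B = Pm^T *m (G *m D) *m Pm.
  have -> : B = H *m (Hi *m B) by rewrite mulmxA HHi mul1mx.
  rewrite hB HE.
  have -> : Pm^T *m G *m Pm *m (Pi *m D *m Pm) = Pm^T *m G *m (Pm *m Pi) *m D *m Pm.
    by rewrite !mulmxA.
  by rewrite PmPi mulmx1 !mulmxA.
have GD : G *m D = D *m G.
  have e : Pm^T *m (G *m D) *m Pm = Pm^T *m (D *m G) *m Pm.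
    by rewrite -BE -[LHS]BT BE !trmx_mul trmxK tr_diag_mx GT !mulmxA.
  have := congr1 (fun X => Pi^T *m X *m Pi) e.
  by rewrite !mulmxA PiTPmT !mul1mx -!mulmxA PmPi !mulmx1.
have KE : B *m Hi *m B = Pm^T *m (G *m (D *m D)) *m Pm.
  rewrite -mulmxA hB {1}BE.
  have -> : Pm^T *m (G *m D) *m Pm *m (Pi *m D *m Pm) =
            Pm^T *m (G *m D) *m (Pm *m Pi) *m D *m Pm by rewrite !mulmxA.
  by rewrite PmPi mulmx1 !mulmxA.
split.
  move=> i; set v : 'cV_n := Pi *m delta_mx i 0.
  have := Bpos v; rewrite BE /v.
  have -> : (Pi *m (delta_mx i 0 : 'cV_n))^T *m (Pm^T *m (G *m D) *m Pm) *m (Pi *m (delta_mx i 0 : 'cV_n))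
     = (delta_mx 0 i : 'rV_n) *m (Pi^T *m Pm^T) *m (G *m D) *m (Pm *m Pi) *m (delta_mx i 0 : 'cV_n).
    by rewrite trmx_mul trmx_delta !mulmxA.
  rewrite PiTPmT PmPi !mulmx1 quad_delta /D mul_mx_diag mxE.
  have Gii : 0 < G i i.
    rewrite -quad_delta -trmx_delta Gpos.
    case: sH => _ pos; apply: pos.
    apply/eqP => h; have := congr1 (mulmx Pm) h.
    rewrite mulmxA PmPi mul1mx mulmx0 => /matrixP /(_ i 0).
    by rewrite !mxE !eqxx /= => /eqP; rewrite oner_eq0.
  by rewrite pmulr_rge0.
move=> c1 c2 hf u.
rewrite KE BE.
have -> : c1 *: (Pm^T *m (G *m D) *m Pm) + c2 *: (Pm^T *m (G *m (D *m D)) *m Pm)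
    = Pm^T *m (G *m (c1 *: D + c2 *: (D *m D))) *m Pm.
  by rewrite !mulmxDr mulmxDl -!scalemxAr -!scalemxAl.
rewrite /D diag_poly.
set f := \row_i _.
set S := diag_mx (\row_i Num.sqrt (f 0 i)).
have GF : G *m diag_mx f = S *m G *m S.
  apply/matrixP => i j; rewrite /S !mul_mx_diag mul_diag_mx !mxE.
  have gij : G i j * d 0 j = d 0 i * G i j.
    have := congr1 (fun X : 'M_n => X i j) GD.
    by rewrite /D mul_mx_diag mul_diag_mx !mxE.
  have [dij|dij] := eqVneq (d 0 i) (d 0 j).
    rewrite dij [RHS]mulrC [RHS]mulrA -[X in X * G i j]expr2 sqr_sqrtr ?(mulrC (G i j)) //.
  have -> : G i j = 0.
    have : G i j * (d 0 j - d 0 i) = 0 by rewrite mulrBr gij mulrC subrr.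
    by move/eqP; rewrite mulf_eq0 subr_eq0 [d 0 j == _]eq_sym (negbTE dij) orbF => /eqP.
  by rewrite !(mul0r, mulr0).
rewrite GF.
have -> : u^T *m (Pm^T *m (S *m G *m S) *m Pm) *m u
    = (S *m (Pm *m u))^T *m G *m (S *m (Pm *m u)).
  by rewrite !trmx_mul /S tr_diag_mx !mulmxA.
rewrite Gpos; exact: spd_ge0.
Qed.

Lemma char_poly_conj (R : realType) n (P D : 'M[R]_n) :
  P \in unitmx -> char_poly (invmx P *m D *m P) = char_poly D.
Proof.
move=> Pu; rewrite /char_poly /char_poly_mx.
have PiP : map_mx polyC (invmx P) *m map_mx polyC P = 1%:M.
  by rewrite -map_mxM mulVmx // map_mx1.
rewrite !map_mxM.
have eX : ('X%:M : 'M[{poly R}]_n) =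
    map_mx polyC (invmx P) *m 'X%:M *m map_mx polyC P.
  by rewrite mul_mx_scalar -scalemxAl PiP scalemx1.
rewrite {1}eX -mulmxBl -mulmxBr !det_mulmx mulrAC -det_mulmx PiP det1 mul1r.
by [].
Qed.

Lemma char_poly_diag (R : realType) n (d : 'rV[R]_n) :
  char_poly (diag_mx d) = \prod_(i < n) ('X - (d 0 i)%:P).
Proof.
rewrite char_poly_trig ?diag_mx_is_trig //; apply: eq_bigr => i _.
by rewrite !mxE eqxx mulr1n.
Qed.

Lemma mup_prod (R : realType) (I : Type) (r : seq I) (F : I -> R) (x : R) :
  mup x (\prod_(i <- r) ('X - (F i)%:P)) = (\sum_(i <- r) (F i == x))%N.
Proof.
elim: r => [|i r IH]; first by rewrite !big_nil mupNroot // root1.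
rewrite !big_cons mupM ?polyXsubC_eq0 //; last first.
  exact: monic_neq0 (monic_prod_XsubC _ _ _).
by rewrite IH -[X in mup x X]expr1 mup_XsubCX.
Qed.

Lemma rank_diag (R : realType) n (d : 'rV[R]_n) :
  \rank (diag_mx d) = (\sum_(i < n) (d 0%R i != 0%R))%N.
Proof.
elim: n d => [|n IH] d; first by rewrite big_ord0 thinmx0 mxrank0.
rewrite big_ord_recl.
have e := rank_diag_block_mx (diag_mx (lsubmx (d : 'rV_(1 + n)))) (diag_mx (rsubmx (d : 'rV_(1 + n)))).
rewrite -diag_mx_row hsubmxK in e.
apply: (etrans e); rewrite IH.
congr (_ + _)%N.
  rewrite rank_rV.
  have -> : diag_mx (lsubmx (d : 'rV_(1 + n))) = (d 0 ord0)%:M.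
    apply/matrixP => i j; rewrite !ord1 !mxE /=.
    by congr (d _ _ *+ _); apply: val_inj.
  congr negb; apply/eqP/eqP => [h|->].
    by have := congr1 (fun M : 'M_1 => M 0 0) h; rewrite !mxE.
  by apply/matrixP => i j; rewrite !mxE mul0rn.
apply: eq_bigr => i _; rewrite mxE.
by congr (d _ _ != _); apply: val_inj.
Qed.

Lemma final_ineq (R : realType) (al be ga de a b : R) :
  0 <= al -> 0 < be -> 0 <= ga -> 0 < de -> 0 < a ->
  a * al <= ga -> de <= b * be ->
  Num.sqrt al / Num.sqrt be <= Num.sqrt (b / a) * (Num.sqrt ga / Num.sqrt de).
Proof.
move=> al0 be0 ga0 de0 a0 h1 h2.
have b0 : 0 < b.
  by rewrite -(pmulr_lgt0 _ be0); apply: lt_le_trans h2.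
have be0' := ltW be0; have de0' := ltW de0; have a0' := ltW a0; have b0' := ltW b0.
rewrite -!sqrtrV // -!sqrtrM ?divr_ge0 // ler_sqrt; last first.
  by rewrite !mulr_ge0 ?invr_ge0.
rewrite ler_pdivrMr //.
have an : a != 0 by rewrite gt_eqF.
have dn : de != 0 by rewrite gt_eqF.
rewrite (_ : b / a * (ga / de) * be = (b * be * ga) / (a * de)); last by field; rewrite an dn.
rewrite ler_pdivlMr ?mulr_gt0 //.
nra.
Qed.

Lemma count_sum (R : realType) (s : seq R) (x : R) :
  count_mem x s = (\sum_(y <- s) (y == x))%N.
Proof.
elim: s => [|y s IH]; first by rewrite big_nil.
by rewrite big_cons /= IH.
Qed.

Lemma sorted_zeros (R : realType) (s : seq R) r N :
  size s = N -> (r < N)%N -> sorted <=%R s -> (forall y, y \in s -> 0 <= y) ->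
  count_mem 0 s = r -> 0 < s`_r /\ (forall i, (i < r)%N -> s`_i = 0).
Proof.
move=> sz rN srt nn cnt.
have le_nth : forall i j, (i <= j)%N -> (j < N)%N -> s`_i <= s`_j.
  move=> i j ij jN; apply: (sorted_leq_nth le_trans lexx 0 srt) => //;
  rewrite inE sz //; exact: leq_ltn_trans ij jN.
have ge0 : forall i, (i < N)%N -> 0 <= s`_i.
  by move=> i iN; apply: nn; apply: mem_nth; rewrite sz.
have cntD : forall k, count_mem (0%R : R) s = (count_mem (0%R : R) (take k s) + count_mem (0%R : R) (drop k s))%N.
  by move=> k; rewrite -count_cat cat_take_drop.
split.
  rewrite lt_def ge0 // andbT; apply/negP => /eqP sr0.
  have : (count_mem (0%R : R) (take r.+1 s) = r.+1)%N.
    have : all (pred1 0) (take r.+1 s).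
      apply/(all_nthP 0) => i; rewrite size_takel ?sz // => ir.
      rewrite nth_take //= eq_sym eq_le ge0 ?(leq_trans ir) //=.
      by rewrite -[X in _ <= X]sr0; apply: le_nth.
    by rewrite all_count => /eqP ->; rewrite size_takel ?sz.
  move=> h; move: (cntD r.+1); rewrite cnt h => e; lia.
move=> i ir; apply/eqP; rewrite eq_le ge0 ?(ltn_trans ir) // andbT.
rewrite leNgt; apply/negP => pos.
have : count_mem (0%R : R) (drop i s) = 0%N.
  apply/eqP; rewrite -leqn0 leqNgt -has_count; apply/negP => /(has_nthP 0) [j].
  rewrite size_drop nth_drop => jl /eqP h.
  have := le_nth i (i + j)%N (leq_addr _ _).
  rewrite h; have : (i + j < N)%N by rewrite sz in jl; lia.
  by move=> iN /(_ iN); rewrite leNgt pos.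
have := count_size (pred1 (0%R : R)) (take i s); rewrite size_takel ?sz; last by apply: ltnW; apply: ltn_trans ir rN.
move=> hc d0; move: (cntD i); rewrite cnt d0 => e; lia.
Qed.

Lemma lin_quad (R : realType) n (B K : 'M[R]_n) (c1 c2 : R) (u : 'cV_n) :
  (u^T *m (c1 *: B + c2 *: K) *m u) 0 0 =
  c1 * (u^T *m B *m u) 0 0 + c2 * (u^T *m K *m u) 0 0.
Proof. by rewrite mulmxDr mulmxDl -!scalemxAr -!scalemxAl !mxE. Qed.

Lemma rank_unitL (R : realType) n (U X : 'M[R]_n) :
  U \in unitmx -> \rank (U *m X) = \rank X.
Proof.
move=> Uu; rewrite -mxrank_tr trmx_mul mxrankMfree ?mxrank_tr //.
by rewrite row_free_unit unitmx_tr.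
Qed.

Theorem corollary1 (R : realType) (n r : nat)
  (A H : 'M[R]_n) (Z : 'M[R]_(n, r)) (b xt : 'cV[R]_n) (s : seq R) :
  spd A -> spd H -> (r < n)%N -> \rank Z = r ->
  deflP A Z *m b != 0 ->
  ordered_eigenvalues (invmx H *m (deflP A Z *m A)) s ->
  let P := deflP A Z in
  let x := invmx A *m b in
  let xj := P^T *m xt + Z *m invmx (Z^T *m A *m Z) *m Z^T *m b in
  let rj := b - A *m xj in
  mxnorm (P *m A) (x - xj) / mxnorm (P *m A) x
    <= Num.sqrt (kappa_eff n r s) *
       (mxnorm (invmx H) rj / mxnorm (invmx H) (P *m b)).
Proof.
case: n A H Z b xt s => [|n] A H Z b xt s; first by move=> _ _; rewrite ltn0.
move=> sA sH rn rZ Pb0 [sz srt cpE]; cbv zeta.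
set P := deflP A Z; set x := invmx A *m b.
set xj := P^T *m xt + _; set rj := b - A *m xj.
have [PE QT QAQ ZAQ] := defl_facts sA rZ.
set Q := Z *m _ *m Z^T in PE QT QAQ ZAQ.
have uA := spd_unit sA; have symA := proj1 sA.
have uH := spd_unit sH; have symH := proj1 sH.
have [BT APT PB BQ PAP] := B_facts symA QT QAQ.
have PE2 : P = 1%:M - A *m Q := PE.
have xE : x = invmx A *m b by [].
have xjE : xj = P^T *m xt + Q *m b by rewrite /xj /Q.
have rjE : rj = b - A *m xj by [].
have rkB := rank_B sA rZ.
rewrite PE -PE2 in rkB cpE Pb0.
clearbody P x xj rj Q; clear PE.
rewrite -PE2 in BT APT PB BQ PAP.
set B := P *m A in BT APT PB BQ PAP rkB cpE *.
have Bx : B *m x = P *m b by rewrite xE mulmxA /B mulmxK.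
have Be : B *m (x - xj) = rj.
  rewrite mulmxBr Bx xjE mulmxDr !mulmxA PAP BQ mul0mx addr0 rjE xjE mulmxDr.
  rewrite !mulmxA APT PE2 mulmxBl mul1mx.
  by rewrite opprD addrA [in RHS]addrAC.
have Bpos : forall v : 'cV_n.+1, 0 <= (v^T *m B *m v) 0 0.
  move=> v; rewrite -PAP.
  have -> : v^T *m (B *m P^T) *m v = (P^T *m v)^T *m A *m (P^T *m v).
    by rewrite trmx_mul trmxK /B !mulmxA.
  exact: spd_ge0.
have sHi := spd_inv sH.
set M := invmx H *m B.
have sa : H *m M = M^T *m H.
  rewrite /M mulmxA mulmxV // mul1mx trmx_mul BT trmx_inv symH.
  by rewrite -mulmxA mulVmx // mulmx1.
have [Pm Pu [d hM]] := diag_M sH sa cpE.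
have [dnn quad] := spec sH BT Bpos Pu hM.
have cpD : char_poly M = \prod_(i < n.+1) ('X - (d 0 i)%:P).
  by rewrite hM char_poly_conj // char_poly_diag.
have cnteq : forall y, count_mem y s = (\sum_(i < n.+1) (d 0%R i == y))%N.
  move=> y; rewrite count_sum.
  have h1 := mup_prod s (fun z => z) y.
  have h2 := mup_prod (index_enum 'I_n.+1) (fun i => d 0 i) y.
  rewrite /= -cpE in h1; rewrite -h1 cpD h2.
  by [].
have rkD : \rank M = (\sum_(i < n.+1) (d 0%R i != 0%R))%N.
  by rewrite hM mxrankMfree ?row_free_unit // rank_unitL ?unitmx_inv // rank_diag.
have rkM : \rank M = \rank B by rewrite /M rank_unitL ?unitmx_inv.
have cnt0 : count_mem 0 s = r.
  rewrite cnteq.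
  have : (\sum_(i < n.+1) (d 0%R i == 0%R) + \sum_(i < n.+1) (d 0%R i != 0%R))%N = n.+1.
    rewrite -big_split /= (eq_bigr (fun _ => 1%N)) ?sum1_card ?card_ord //.
    by move=> i _; case: (_ == _).
  rewrite -rkD rkM rkB => h; apply/eqP; rewrite -(eqn_add2r (n.+1 - r)) h subnKC ?(ltnW rn) //.
have nn : forall y, y \in s -> 0 <= y.
  move=> y ys; have : (0 < count_mem y s)%N by rewrite -has_count has_pred1.
  rewrite cnteq; case: (pickP (fun i : 'I_n.+1 => d 0 i == y)) => [i /eqP <- _|none].
    exact: dnn.
  by rewrite big1 // => i _; rewrite none.
have [apos zr] := sorted_zeros sz rn srt nn cnt0.
have le_nth : forall i j, (i <= j)%N -> (j < n.+1)%N -> s`_i <= s`_j.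
  move=> i j ij jN; apply: (sorted_leq_nth le_trans lexx 0 srt) => //;
  rewrite inE sz //; exact: leq_ltn_trans ij jN.
have dbnd : forall j, [/\ 0 <= d 0 j, d 0 j <= s`_n & d 0 j = 0 \/ s`_r <= d 0 j].
  move=> j; have : d 0 j \in s.
    rewrite -has_pred1 has_count cnteq (bigD1 j) //= eqxx; lia.
  case/(nthP 0) => k; rewrite sz => kn dk.
  split; first exact: dnn.
    by rewrite -dk; apply: le_nth.
  case: (ltnP k r) => kr; first by left; rewrite -dk zr.
  by right; rewrite -dk; apply: le_nth.
set a := s`_r; set bb := s`_n.
set e := x - xj.
have q1 := quad (- a) 1 _ e.
have q2 := quad bb (-1) _ x.
rewrite lin_quad in q1; rewrite lin_quad in q2.
have f1 : forall i, 0 <= - a * d 0 i + 1 * d 0 i ^+ 2.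
  move=> i; have [h0 hb [->|ha]] := dbnd i; first by rewrite expr0n /= !mulr0 addr0.
  rewrite /a; nra.
have f2 : forall i, 0 <= bb * d 0 i + -1 * d 0 i ^+ 2.
  move=> i; have [h0 hb _] := dbnd i; rewrite /bb; nra.
have {q1 f1}q1 := q1 f1; have {q2 f2}q2 := q2 f2.
have gaE : mxnorm (invmx H) rj = Num.sqrt ((e^T *m (B *m invmx H *m B) *m e) 0 0).
  by rewrite /mxnorm -Be trmx_mul BT !mulmxA.
have deE : mxnorm (invmx H) (P *m b) = Num.sqrt ((x^T *m (B *m invmx H *m B) *m x) 0 0).
  by rewrite /mxnorm -Bx trmx_mul BT !mulmxA.
rewrite gaE deE /kappa_eff /= -/bb -/a /mxnorm.
apply: final_ineq.
- exact: Bpos.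
- rewrite lt_def Bpos andbT; apply/eqP => h.
  move: Pb0; rewrite -Bx -PAP.
  have : (P^T *m x) = 0.
    apply: (spd_eq0 sA); rewrite -h.
    by rewrite -[in RHS]PAP trmx_mul trmxK /B !mulmxA.
  by rewrite -mulmxA => ->; rewrite mulmx0 eqxx.
- have -> : e^T *m (B *m invmx H *m B) *m e = (B *m e)^T *m invmx H *m (B *m e).
    by rewrite trmx_mul BT !mulmxA.
  exact: spd_ge0.
- have -> : x^T *m (B *m invmx H *m B) *m x = (B *m x)^T *m invmx H *m (B *m x).
    by rewrite trmx_mul BT !mulmxA.
  by case: sHi => _ pos; apply: pos; rewrite Bx.
- exact: apos.
- lra.
- lra.
Qed.
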